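(* Let $\hat B$ be the bus susceptance matrix of a connected power network with bus set $\mathcal N$. Let $P^g, P^d \in \mathbb R^{\mathcal N}$ and let $\theta$ satisfy $\hat B\theta = P^g - P^d$. Let $s \neq t$ be two generator buses, let $\Gamma > 0$, and define $\delta$ by $\delta_s = \Gamma$, $\delta_t = -\Gamma$, $\delta_k = 0$ for $k \neq s,t$; let $\hat\theta$ satisfy $\hat B\hat\theta = P^g + \delta - P^d$. Let $k \neq t$ be a bus such that every path in the network between $s$ and $k$ includes $t$. Then $$\hat\theta_k - \hat\theta_t \;=\; \theta_k - \theta_t .$$
   Context: DC power flow model. The network is an undirected connected graph on the bus set $\mathcal N$; each line $km$ has reactance $x_{km} > 0$. The bus susceptance matrix $\hat B$ is defined by $\hat B_{kk} = \sum_{km \ni k} 1/x_{km}$ (sum over lines incident to $k$), $\hat B_{km} = -1/x_{km}$ if $km$ is a line, and $\hat B_{km} = 0$ otherwise. *)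

(* Defs.v *)
From HB Require Import structures.
From mathcomp Require Import all_boot all_order all_algebra.
Set Implicit Arguments. Unset Strict Implicit. Unset Printing Implicit Defensive.
Import Order.TTheory GRing.Theory Num.Theory.
Local Open Scope ring_scope.

(* A power network: buses form a finite type N, lines are given by a
   symmetric irreflexive adjacency relation [e] (simple graph), and each
   line km has reactance [x k m] (symmetric, > 0 on lines). *)
Definition simple_graph (N : finType) (e : rel N) : Prop :=
  (forall k m, e k m = e m k) /\ (forall k, ~~ e k k).

Definition connected_graph (N : finType) (e : rel N) : Prop :=
  forall k m, connect e k m.

Definition valid_reactance (R : realFieldType) (N : finType) (e : rel N)
  (x : N -> N -> R) : Prop :=
  (forall k m, x k m = x m k) /\ (forall k m, e k m -> 0 < x k m).

Definition Bhat (R : realFieldType) (N : finType) (e : rel N)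
  (x : N -> N -> R) (k m : N) : R :=
  if k == m then \sum_(j | e k j) (x k j)^-1
  else if e k m then - (x k m)^-1 else 0.

Definition Bmul (R : realFieldType) (N : finType) (e : rel N)
  (x : N -> N -> R) (theta : N -> R) (k : N) : R :=
  \sum_m Bhat e x k m * theta m.

Definition every_path_through (N : finType) (e : rel N) (s k t : N) : Prop :=
  forall p : seq N, path e s p -> last s p = k -> t \in s :: p.

(* Main.v *)
Require Import Defs.
From HB Require Import structures.
From mathcomp Require Import all_boot all_order all_algebra.
Import Order.TTheory GRing.Theory Num.Theory.
From mathcomp Require Import ring.
Local Open Scope ring_scope.

Definition wt (R : realFieldType) (N : finType) (e : rel N)
  (x : N -> N -> R) (i j : N) : R := if e i j then (x i j)^-1 else 0.

Arguments wt {R N}.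

Lemma BmulE (R : realFieldType) (N : finType) (e : rel N)
  (x : N -> N -> R) (f : N -> R) (i : N) :
  ~~ e i i ->
  Bmul e x f i = \sum_j wt e x i j * (f i - f j).
Proof.
move=> irr.
have H : forall m, Bhat e x i m * f m =
   (i == m)%:R * ((\sum_(j | e i j) (x i j)^-1) * f m) - wt e x i m * f m.
  move=> m; rewrite /Bhat /wt; case: (eqVneq i m) => [<-|ne].
    by rewrite (negbTE irr) mul1r mul0r subr0.
  case: (e i m) => /=.
    by rewrite mul0r sub0r mulNr.
  by rewrite !mul0r subr0.
rewrite /Bmul (eq_bigr _ (fun m _ => H m)) sumrB.
rewrite [X in X - _](bigD1 i (P:=predT)) //= eqxx mul1r.
rewrite [X in _ + X - _]big1 ?addr0; last first.
  by move=> m; rewrite eq_sym => /negbTE ->; rewrite mul0r.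
under [RHS]eq_bigr => j _ do rewrite mulrBr.
rewrite sumrB -mulr_suml; congr (_ * _ - _).
by rewrite big_mkcond.
Qed.

Lemma path_avoid {N : finType} {e : rel N} {t : N} {a : N} {p : seq N} :
  path [rel a b | e a b && (a != t) && (b != t)] a p -> t \notin p.
Proof.
elim: p a => [|b p IH] a //= /andP [/andP [/andP [_ _] bt] Hp].
by rewrite in_cons negb_or eq_sym bt /= (IH b Hp).
Qed.

Theorem lemma3 (R : realFieldType) (N : finType) (e : rel N)
  (x : N -> N -> R) (gens : {set N})
  (Pg Pd theta thetah : N -> R) (s t k : N) (Gamma : R) :
  simple_graph e -> connected_graph e -> valid_reactance e x ->
  (forall i, Bmul e x theta i = Pg i - Pd i) ->
  s \in gens -> t \in gens -> s != t -> 0 < Gamma ->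
  (forall i, Bmul e x thetah i =
     Pg i + (if i == s then Gamma else if i == t then - Gamma else 0) - Pd i) ->
  k != t -> every_path_through e s k t ->
  thetah k - thetah t = theta k - theta t.
Proof.
move=> [esm eirr] conn [xsym xpos] Hth _ _ snt _ Hthh knt Hpath.
pose d := fun i => thetah i - theta i.
pose u := fun i => d i - d t.
pose e' := [rel a b | e a b && (a != t) && (b != t)].
pose v := fun i => if connect e' k i then u i else 0.
pose w := wt e x.
have wsym : forall i j, w i j = w j i.
  by move=> i j; rewrite /w /wt esm xsym.
have wge0 : forall i j, 0 <= w i j.
  by move=> i j; rewrite /w /wt; case: ifP => // /xpos; rewrite invr_ge0 => /ltW.
have Hu : forall i, \sum_j w i j * (u i - u j) =
   (if i == s then Gamma else if i == t then - Gamma else 0).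
  move=> i.
  have -> : \sum_j w i j * (u i - u j) = Bmul e x thetah i - Bmul e x theta i.
    rewrite !BmulE // -sumrB; apply: eq_bigr => j _.
    rewrite /w /u /d; ring.
  rewrite Hthh Hth; ring.
have ut : u t = 0 by rewrite /u subrr.
have vt : v t = 0 by rewrite /v; case: ifP.
have e'sym : symmetric e'.
  by move=> a b; rewrite /e' /= esm andbAC [in RHS]andbAC -andbA -andbA [(a != t) && _]andbC.
have sNS : ~~ connect e' k s.
  apply/negP; rewrite (sym_connect_sym e'sym) => /connectP [p Hp Hl].
  have sub : subrel e' e by move=> a b /andP [/andP [-> _] _].
  have := Hpath p (sub_path sub Hp) (esym Hl).
  by rewrite in_cons eq_sym (negbTE snt) /= (negbTE (path_avoid Hp)).
have HE : \sum_i \sum_j w i j * v i * (v i - v j) = 0.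
  apply: big1 => i _; rewrite {1 2}/v.
  case Ci: (connect e' k i); last by apply: big1 => j _; rewrite mulr0 mul0r.
  case: (eqVneq i t) => [->|nit].
    by apply: big1 => j _; rewrite ut mulr0 mul0r.
  transitivity (u i * \sum_j w i j * (u i - u j)); last first.
    rewrite Hu (negbTE nit); case: (eqVneq i s) => [eis|]; last by rewrite mulr0.
    by move: sNS; rewrite -eis Ci.
  rewrite mulr_sumr; apply: eq_bigr => j _.
  rewrite /w /wt; case Eij: (e i j); last by rewrite !mul0r mulr0.
  have -> : v j = u j.
    case: (eqVneq j t) => [->|njt]; first by rewrite vt ut.
    rewrite /v (connect_trans Ci) //; apply: connect1.
    by rewrite /e' /= Eij nit njt.
  ring.
have HE2 : \sum_i \sum_j w i j * (v i - v j) ^+ 2 = 0.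
  have -> : \sum_i \sum_j w i j * (v i - v j) ^+ 2 =
     \sum_i \sum_j w i j * v i * (v i - v j) + \sum_i \sum_j w i j * v j * (v j - v i).
    rewrite -big_split; apply: eq_bigr => i _; rewrite -big_split; apply: eq_bigr => j _ /=.
    ring.
  rewrite HE add0r exchange_big /= -[RHS]HE; apply: eq_bigr => i _; apply: eq_bigr => j _.
  by rewrite wsym.
have edge : forall i j, e i j -> v i = v j.
  move=> i j Eij.
  have pos : forall i0 j0, 0 <= w i0 j0 * (v i0 - v j0) ^+ 2.
    by move=> i0 j0; apply: mulr_ge0 (wge0 i0 j0) (sqr_ge0 _).
  have H1 : \sum_j w i j * (v i - v j) ^+ 2 = 0.
    apply: (psumr_eq0P _ HE2) => // i0 _.
    by apply: sumr_ge0 => j0 _; apply: pos.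
  have : w i j * (v i - v j) ^+ 2 = 0.
    by apply: (psumr_eq0P _ H1) => // j0 _; apply: pos.
  move/eqP; rewrite mulf_eq0 expf_eq0 /= subr_eq0 => /orP [|/eqP //].
  by rewrite /w /wt Eij invr_eq0 => /eqP h; move: (xpos _ _ Eij); rewrite h ltxx.
have cl : closed e [pred i | v i == v t].
  by move=> a b /edge; rewrite !inE => ->.
have := closed_connect cl (conn t k); rewrite !inE eqxx => /esym/eqP.
rewrite vt /v connect0 /u /d => /eqP; rewrite subr_eq0 => /eqP H.
apply/eqP; rewrite -subr_eq0; apply/eqP.
have -> : thetah k - thetah t - (theta k - theta t) = (thetah k - theta k) - (thetah t - theta t) by ring.
by rewrite H subrr.
Qed.
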